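(* Let $\mathcal{F}$ and $\mathcal{L}$ be classes of simple graphs, where $\mathcal{L}$ is finite and its elements are pairwise non-isomorphic. Let $\alpha\colon\mathcal{L}\to\mathbb{R}\setminus\{0\}$. If for all simple graphs $G$ and $H$, \[ G\equiv_{\mathcal{F}}H \implies \sum_{L\in\mathcal{L}}\alpha_L\hom(L,G)=\sum_{L\in\mathcal{L}}\alpha_L\hom(L,H),\] then $\mathcal{L}\subseteq\mathrm{cl}(\mathcal{F})$.
   Context: All graphs are finite, undirected, without multiple edges; simple means without loops. $\hom(F,G)$ is the number of homomorphisms $F\to G$. $G\equiv_{\mathcal{F}}H$ means $\hom(F,G)=\hom(F,H)$ for all $F\in\mathcal{F}$. $\mathrm{cl}(\mathcal{F})$ is the class of all simple graphs $K$ such that for all simple graphs $G,H$, $G\equiv_{\mathcal{F}}H$ implies $\hom(K,G)=\hom(K,H)$. *)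

(* Defs.v *)
From mathcomp Require Import all_boot all_order all_algebra.
From mathcomp Require Import reals.
Set Implicit Arguments. Unset Strict Implicit. Unset Printing Implicit Defensive.

(* Every finite simple graph is isomorphic to one of these,
   and all notions below are isomorphism-invariant. *)
Record sgraph := SGraph {
  sg_n : nat;
  sg_adj : rel 'I_sg_n;
  sg_sym : symmetric sg_adj;
  sg_irr : irreflexive sg_adj }.

Definition homc (F G : sgraph) : nat :=
  #|[set f : {ffun 'I_(sg_n F) -> 'I_(sg_n G)} |
      [forall x, forall y, sg_adj x y ==> sg_adj (f x) (f y)]]|.

Definition isomorphic (F G : sgraph) : Prop :=
  exists f : 'I_(sg_n F) -> 'I_(sg_n G),
    bijective f /\ forall x y, sg_adj (f x) (f y) = sg_adj x y.

Definition hom_equiv (Fc : sgraph -> Prop) (G H : sgraph) : Prop :=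
  forall F, Fc F -> homc F G = homc F H.

Definition cl (Fc : sgraph -> Prop) (K : sgraph) : Prop :=
  forall G H, hom_equiv Fc G H -> homc K G = homc K H.

(* Main.v *)
Require Import Defs.
From mathcomp Require Import all_boot all_order all_algebra.
From mathcomp Require Import reals.
Import GRing.Theory Num.Theory.
Set Implicit Arguments. Unset Strict Implicit. Unset Printing Implicit Defensive.

Definition ishom (n : nat) (a : rel 'I_n) (T : finType) (r : rel T)
  (f : {ffun 'I_n -> T}) : bool :=
  [forall x, forall y, a x y ==> r (f x) (f y)].
Definition homT n (a : rel 'I_n) (T : finType) (r : rel T) : nat :=
  #|[set f : {ffun 'I_n -> T} | ishom a r f]|.

Lemma homcE (F G : sgraph) : homc F G = homT (@sg_adj F) (@sg_adj G).
Proof. by []. Qed.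

Lemma ishomP n (a : rel 'I_n) (T : finType) (r : rel T) (f : {ffun 'I_n -> T}) :
  reflect (forall x y, a x y -> r (f x) (f y)) (@ishom n a T r f).
Proof.
apply: (iffP forallP) => [H x y axy | H x].
  by have /forallP/(_ y)/implyP := H x; apply.
by apply/forallP => y; apply/implyP; apply: H.
Qed.

Lemma homT_bij n (a : rel 'I_n) (T T' : finType) (r : rel T) (r' : rel T')
  (g : T -> T') :
  bijective g -> (forall x y, r' (g x) (g y) = r x y) -> homT a r = homT a r'.
Proof.
move=> [h gK hK] gr.
pose phi := fun f : {ffun 'I_n -> T} => [ffun x => g (f x)].
pose psi := fun f : {ffun 'I_n -> T'} => [ffun x => h (f x)].
have phiK : cancel phi psi by move=> f; apply/ffunP => x; rewrite !ffunE gK.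
rewrite /homT -(card_imset _ (can_inj phiK)); apply: eq_card => f'; rewrite inE.
apply/imsetP/idP.
- move=> [f]; rewrite inE => Hf ->; apply/ishomP => x y axy.
  by rewrite !ffunE gr; apply: (elimT (ishomP _ _ _) Hf).
- move=> Hf'; exists (psi f').
    rewrite inE; apply/ishomP => x y axy; rewrite !ffunE -gr !hK.
    exact: (elimT (ishomP _ _ _) Hf').
  by apply/ffunP => x; rewrite !ffunE hK.
Qed.

Definition mkg (T : finType) (r : rel T) (Hs : symmetric r) (Hi : irreflexive r)
  : sgraph.
refine (@SGraph #|T| (fun i j => r (enum_val i) (enum_val j)) _ _).
- by move=> i j; rewrite Hs.
- by move=> i; rewrite Hi.
Defined.

Lemma homc_mkg F (T : finType) (r : rel T) Hs Hi :
  homc F (@mkg T r Hs Hi) = homT (@sg_adj F) r.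
Proof.
rewrite homcE.
symmetry; apply: (homT_bij _ (Bijective (@enum_rankK T) (@enum_valK T))).
move=> x y /=. by rewrite !enum_rankK.
Qed.

Definition prel (T1 T2 : finType) (r1 : rel T1) (r2 : rel T2) : rel (T1 * T2) :=
  fun p q => r1 p.1 q.1 && r2 p.2 q.2.

Lemma homT_prod n (a : rel 'I_n) (T1 T2 : finType) (r1 : rel T1) (r2 : rel T2) :
  homT a (prel r1 r2) = homT a r1 * homT a r2.
Proof.
rewrite /homT -cardsX.
pose phi := fun p : {ffun 'I_n -> T1} * {ffun 'I_n -> T2} =>
  [ffun x => (p.1 x, p.2 x)].
have phi_inj : injective phi.
  move=> [f1 f2] [g1 g2] /ffunP H; congr pair; apply/ffunP => x;
  by have := H x; rewrite !ffunE => -[].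
rewrite -(card_imset _ phi_inj); apply: eq_card => f; rewrite inE.
apply/idP/imsetP.
- move=> Hf; exists ([ffun x => (f x).1], [ffun x => (f x).2]).
    rewrite in_setX !inE /=; apply/andP; split; apply/ishomP => x y axy;
    by rewrite !ffunE; have /andP[] := (elimT (ishomP _ _ _) Hf) x y axy.
  by apply/ffunP => x; rewrite !ffunE; case: (f x).
- move=> [[f1 f2]]; rewrite in_setX !inE /= => /andP[H1 H2] ->.
  apply/ishomP => x y axy; rewrite /prel !ffunE /=; apply/andP; split.
    exact: (elimT (ishomP _ _ _) H1).
  exact: (elimT (ishomP _ _ _) H2).
Qed.

Definition srel (T : finType) (r : rel T) (S : {set T}) : rel {x : T | x \in S} :=
  fun x y => r (val x) (val y).

Definition img n (T : finType) (f : {ffun 'I_n -> T}) : {set T} := f @: setT.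

Definition homS n (a : rel 'I_n) (T : finType) (r : rel T) (S : {set T}) :=
  #|[set f : {ffun 'I_n -> T} | ishom a r f && (img f \subset S)]|.
Definition surjS n (a : rel 'I_n) (T : finType) (r : rel T) (S : {set T}) :=
  #|[set f : {ffun 'I_n -> T} | ishom a r f && (img f == S)]|.

Lemma homT_srel n (a : rel 'I_n) (T : finType) (r : rel T) S :
  homT a (@srel T r S) = homS a r S.
Proof.
pose phi := fun f : {ffun 'I_n -> {x : T | x \in S}} => [ffun x => val (f x)].
have phi_inj : injective phi.
  move=> f g /ffunP H; apply/ffunP => x; apply: val_inj.
  by have := H x; rewrite !ffunE.
rewrite /homT /homS -(card_imset _ phi_inj); apply: eq_card => f; rewrite inE.
apply/imsetP/idP.
- move=> [g]; rewrite inE => Hg ->; apply/andP; split.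
    apply/ishomP => x y axy; rewrite !ffunE; exact: (elimT (ishomP _ _ _) Hg).
  by apply/subsetP => y /imsetP[x _ ->]; rewrite ffunE; apply: valP.
- move=> /andP[Hf Hs].
  have HS : forall x, f x \in S.
    by move=> x; apply: (subsetP Hs); apply: imset_f; rewrite inE.
  exists [ffun x => exist (fun y => y \in S) (f x) (HS x)].
    rewrite inE; apply/ishomP => x y axy; rewrite /srel !ffunE /=.
    exact: (elimT (ishomP _ _ _) Hf).
  by apply/ffunP => x; rewrite !ffunE.
Qed.

Lemma homS_sum n (a : rel 'I_n) (T : finType) (r : rel T) S :
  homS a r S = \sum_(U : {set T} | U \subset S) surjS a r U.
Proof.
rewrite /homS -sum1_card (partition_big (fun f => img f) (fun U => U \subset S)).
  apply: eq_bigr => U HU; rewrite /surjS -sum1_card; apply: eq_bigl => f.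
  rewrite !inE; case: eqP => [->|]; by rewrite ?HU ?andbT ?andbF.
by move=> f; rewrite inE => /andP[].
Qed.
Local Open Scope ring_scope.

Lemma srel_sym (T : finType) (r : rel T) S : symmetric r -> symmetric (@srel T r S).
Proof. by move=> h x y; rewrite /srel h. Qed.
Lemma srel_irr (T : finType) (r : rel T) S : irreflexive r -> irreflexive (@srel T r S).
Proof. by move=> h x; rewrite /srel h. Qed.

Lemma stepA (R : numDomainType) k (L : 'I_k -> sgraph) (c : 'I_k -> R) :
  (forall K : sgraph, \sum_(i < k) c i * (homc (L i) K)%:R = 0) ->
  forall (K : sgraph) (S : {set 'I_(sg_n K)}),
    \sum_(i < k) c i * (surjS (@sg_adj (L i)) (@sg_adj K) S)%:R = 0.
Proof.
move=> Hc K S.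
elim: {S}#|S|.+1 {-2}S (ltnSn #|S|) => // m IH S HS.
have E := Hc (mkg (@srel_sym _ _ S (@sg_sym K)) (@srel_irr _ _ S (@sg_irr K))).
have E2 : \sum_(i < k) c i * (homS (@sg_adj (L i)) (@sg_adj K) S)%:R = 0.
  by rewrite -[RHS]E; apply: eq_bigr => i _; rewrite homc_mkg homT_srel.
move: E2; under eq_bigr do rewrite homS_sum natr_sum mulr_sumr.
rewrite exchange_big /= (bigD1 S) //=.
have -> : \sum_(U : {set 'I_(sg_n K)} | (U \subset S) && (U != S))
    \sum_(i < k) c i * (surjS (@sg_adj (L i)) (@sg_adj K) U)%:R = 0.
  apply: big1 => U /andP[sub neq].
  apply: IH; have pr : U \proper S by rewrite properEneq neq sub.
  exact: leq_trans (proper_card pr) HS.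
by rewrite addr0.
Qed.

Lemma stepB (R : numDomainType) k (L : 'I_k -> sgraph) (c : 'I_k -> R) :
  (forall i j : 'I_k, isomorphic (L i) (L j) -> i = j) ->
  (forall (K : sgraph) (S : {set 'I_(sg_n K)}),
    \sum_(i < k) c i * (surjS (@sg_adj (L i)) (@sg_adj K) S)%:R = 0) ->
  forall i, c i = 0.
Proof.
move=> Hiso HA i0; apply/eqP; apply/negPn/negP => ci0.
pose nn j := sg_n (L j).
pose ee j := #|[set p : 'I_(sg_n (L j)) * 'I_(sg_n (L j)) | @sg_adj (L j) p.1 p.2]|.
pose A := [pred j | c j != 0].
pose m := (\max_(j in A) nn j)%N.
have [j1 Hj1 Em] : {j1 | j1 \in A & m = nn j1}.
  apply: eq_bigmax_cond; apply/card_gt0P; exists i0; by rewrite inE.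
have Pj1 : (c j1 != 0) && (nn j1 == m) by rewrite Em eqxx andbT; exact: Hj1.
case: (@arg_minnP _ j1 (fun j => (c j != 0) && (nn j == m)) ee Pj1)
  => i /andP[ci /eqP ni] imin.
have := HA (L i) setT.
rewrite (bigD1 i) //= big1 ?addr0.
- move/eqP; rewrite mulf_eq0 (negbTE ci) /= pnatr_eq0 cards_eq0.
  move=> /eqP/setP/(_ [ffun x => x]); rewrite !inE => /negbT/negP; apply.
  apply/andP; split.
    by apply/ishomP => x y; rewrite !ffunE.
  apply/eqP/setP => y; rewrite inE; apply/imsetP; exists y; by rewrite ?inE ?ffunE.
- move=> j neq; have [->|cj] := eqVneq (c j) 0; first by rewrite mul0r.
  apply/eqP; rewrite mulf_eq0 pnatr_eq0 cards_eq0; apply/orP; right.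
  apply/eqP/setP => f; rewrite !inE.
  apply/negbTE/negP => /andP[hf /eqP imf].
  have nj : (nn j <= m)%N by apply: leq_bigmax_cond; rewrite inE.
  have cimg : #|img f| = nn i by rewrite imf cardsT card_ord.
  have cle : (#|img f| <= nn j)%N.
    by rewrite /img (leq_trans (leq_imset_card _ _)) // cardsT card_ord.
  have eqn : nn j = nn i.
    by apply/eqP; rewrite eqn_leq ni nj /= -ni -cimg.
  have finj : injective f.
    have : #|img f| == #|[set: 'I_(sg_n (L j))]| by rewrite cimg cardsT card_ord; apply/eqP; exact: esym eqn.
    by move/imset_injP => H x y; apply: H; rewrite inE.
  pose phi := fun p : 'I_(sg_n (L j)) * 'I_(sg_n (L j)) => (f p.1, f p.2).
  have phi_inj : injective phi by move=> [x1 x2] [y1 y2] [/finj -> /finj ->].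
  pose Ej := [set p : 'I_(sg_n (L j)) * 'I_(sg_n (L j)) | @sg_adj (L j) p.1 p.2].
  pose Ei := [set p : 'I_(sg_n (L i)) * 'I_(sg_n (L i)) | @sg_adj (L i) p.1 p.2].
  have sub : phi @: Ej \subset Ei.
    apply/subsetP => q /imsetP[p]; rewrite inE => pE ->; rewrite inE /=.
    exact: (elimT (ishomP _ _ _) hf) _ _ pE.
  have le2 : (ee i <= ee j)%N by apply: imin; rewrite cj /= eqn ni eqxx.
  have Eeq : phi @: Ej = Ei.
    by apply/eqP; rewrite eqEcard sub /= card_imset.
  have iso : isomorphic (L j) (L i).
    exists f; split.
      by apply: inj_card_bij finj _; rewrite !card_ord -/(nn i) -/(nn j) eqn.
    move=> x y; apply/idP/idP; last by apply: (elimT (ishomP _ _ _) hf).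
    move=> e; have : (f x, f y) \in Ei by rewrite inE.
    rewrite -Eeq => /imsetP[[p1 p2]]; rewrite inE /= => pe [/finj e1 /finj e2].
    by rewrite e1 e2.
  by move: neq; rewrite (Hiso _ _ iso) eqxx.
Qed.
Definition prel_sym (T1 T2 : finType) (r1 : rel T1) (r2 : rel T2) :
  symmetric r1 -> symmetric r2 -> symmetric (prel r1 r2).
Proof. by move=> h1 h2 p q; rewrite /prel h1 h2. Qed.
Definition prel_irr (T1 T2 : finType) (r1 : rel T1) (r2 : rel T2) :
  irreflexive r1 -> irreflexive (prel r1 r2).
Proof. by move=> h1 p; rewrite /prel h1. Qed.

Unset Implicit Arguments.
Theorem lemma6 (R : realType) (Fc : sgraph -> Prop) (k : nat)
  (L : 'I_k -> sgraph) (alpha : 'I_k -> R) :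
  (forall i j : 'I_k, isomorphic (L i) (L j) -> i = j) ->
  (forall i : 'I_k, alpha i != 0) ->
  (forall G H : sgraph, hom_equiv Fc G H ->
     \sum_(i < k) alpha i * (homc (L i) G)%:R =
     \sum_(i < k) alpha i * (homc (L i) H)%:R) ->
  forall i : 'I_k, cl Fc (L i).
Proof.
move=> Hiso Hal Hsum i0 G H Heq.
pose c j := alpha j * ((homc (L j) G)%:R - (homc (L j) H)%:R).
have Hc : forall K : sgraph, \sum_(j < k) c j * (homc (L j) K)%:R = 0.
  move=> K.
  pose PG := mkg (prel_sym (@sg_sym G) (@sg_sym K)) (@prel_irr _ _ _ (@sg_adj K) (@sg_irr G)).
  pose PH := mkg (prel_sym (@sg_sym H) (@sg_sym K)) (@prel_irr _ _ _ (@sg_adj K) (@sg_irr H)).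
  have E : forall F, homc F PG = (homc F G * homc F K)%N /\ homc F PH = (homc F H * homc F K)%N.
    by move=> F; rewrite !homc_mkg !homT_prod.
  have Heq' : hom_equiv Fc PG PH.
    by move=> F HF; have [-> ->] := E F; rewrite (Heq F HF).
  have := Hsum _ _ Heq'.
  have -> : \sum_(j < k) alpha j * (homc (L j) PG)%:R =
            \sum_(j < k) alpha j * (homc (L j) G)%:R * (homc (L j) K)%:R.
    by apply: eq_bigr => j _; have [-> _] := E (L j); rewrite natrM mulrA.
  have -> : \sum_(j < k) alpha j * (homc (L j) PH)%:R =
            \sum_(j < k) alpha j * (homc (L j) H)%:R * (homc (L j) K)%:R.
    by apply: eq_bigr => j _; have [_ ->] := E (L j); rewrite natrM mulrA.
  move/eqP; rewrite -subr_eq0 -sumrB => /eqP E0; rewrite -[RHS]E0.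
  by apply: eq_bigr => j _; rewrite /c mulrBr mulrBl.
have := stepB Hiso (stepA Hc) i0.
rewrite /c => /eqP; rewrite mulf_eq0 (negbTE (Hal i0)) /= subr_eq0 eqr_nat.
by move/eqP.
Qed.
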